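(* Let $q_\sigma$ be a noise distribution satisfying the Assumption below, let $p$ be a probability distribution on $\mathcal A$ with finite support, let $a'\in\mathcal A$ with $q_\sigma(a'\mid a)>0$ for all $a\in\mathrm{supp}(p)$ and $\sigma>0$, and let $S:\mathcal A\times\mathcal A\to\mathbb R$ be any function. Define $$p(a\mid a')=\frac{q_\sigma(a'\mid a)\,p(a)}{\sum_{b\in\mathrm{supp}(p)}q_\sigma(a'\mid b)\,p(b)}.$$ Then $$\lim_{\sigma\to0^+}\sum_{a\in\mathrm{supp}(p)}S(a,a')\,p(a\mid a')=\frac{\sum_{a\in C(a',p)}S(a,a')\,p(a)}{\sum_{a\in C(a',p)}p(a)}=\mathbb{E}_{a\sim p_C(\cdot\mid a')}\big[S(a,a')\big],$$ where $C(a',p)=\{a\in\mathrm{supp}(p):\ \|a'-a\|_2^2\le\|a'-y\|_2^2\ \text{for all } y\in\mathrm{supp}(p)\}$ and $p_C(a\mid a')=p(a)/\sum_{b\in C(a',p)}p(b)$ for $a\in C(a',p)$.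
   Context: Action space $\mathcal A\subseteq\mathbb R^n$. A noise distribution $q_\sigma(\cdot\mid a)$ is a probability density/mass function parameterized by $a\in\mathcal A$ and $\sigma>0$ whose support contains $\mathcal A$. Assumption: for all $a,a_1,a_2\in\mathcal A$: (1) if $\|a_1-a\|_2^2>\|a_2-a\|_2^2$ then $\lim_{\sigma\to0^+}q_\sigma(a\mid a_1)/q_\sigma(a\mid a_2)=0$; (2) if $\|a_1-a\|_2^2=\|a_2-a\|_2^2$ then $\lim_{\sigma\to0^+}q_\sigma(a\mid a_1)/q_\sigma(a\mid a_2)=1$. *)

(* Defs.v *)
From HB Require Import structures.
From mathcomp Require Import all_boot all_order all_algebra.
From mathcomp Require Import all_classical all_reals all_analysis.
Set Implicit Arguments. Unset Strict Implicit. Unset Printing Implicit Defensive.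
Import Order.TTheory GRing.Theory Num.Theory.
Import numFieldNormedType.Exports.
Local Open Scope ring_scope.
Local Open Scope classical_set_scope.

Definition sqdist (R : realType) (n : nat) (x y : 'rV[R]_n) : R :=
  \sum_(i < n) (x ord0 i - y ord0 i) ^+ 2.

(* A noise family q sigma x a = q_sigma(x | a): nonnegative, satisfying
   the Assumption (1) and (2) on the action space A. *)
Definition noise_assumption (R : realType) (n : nat) (A : set 'rV[R]_n)
  (q : R -> 'rV[R]_n -> 'rV[R]_n -> R) : Prop :=
  (forall s x a, 0 < s -> 0 <= q s x a) /\
  (forall a a1 a2, A a -> A a1 -> A a2 ->
     sqdist a1 a > sqdist a2 a ->
     (fun s => q s a a1 / q s a a2) @ 0^'+ --> (0:R)) /\
  (forall a a1 a2, A a -> A a1 -> A a2 ->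
     sqdist a1 a = sqdist a2 a ->
     (fun s => q s a a1 / q s a a2) @ 0^'+ --> (1:R)).

Definition finite_support_prob (R : realType) (n : nat) (A : set 'rV[R]_n)
  (p : 'rV[R]_n -> R) (supp : seq 'rV[R]_n) : Prop :=
  uniq supp /\ {subset supp <= A} /\
  (forall x, 0 <= p x) /\ (forall x, (0 < p x) <-> (x \in supp)) /\
  \sum_(x <- supp) p x = 1.

Definition closest (R : realType) (n : nat) (supp : seq 'rV[R]_n)
  (a' : 'rV[R]_n) : pred 'rV[R]_n :=
  [pred a | (a \in supp) && all (fun y => sqdist a' a <= sqdist a' y) supp].

Definition posterior (R : realType) (n : nat) (q : R -> 'rV[R]_n -> 'rV[R]_n -> R)
  (p : 'rV[R]_n -> R) (supp : seq 'rV[R]_n) (s : R) (a' a : 'rV[R]_n) : R :=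
  q s a' a * p a / \sum_(b <- supp) q s a' b * p b.

Definition pC (R : realType) (n : nat) (p : 'rV[R]_n -> R) (supp : seq 'rV[R]_n)
  (a' a : 'rV[R]_n) : R :=
  p a / \sum_(b <- supp | b \in closest supp a') p b.

(* Main.v *)
Require Import Defs.
From HB Require Import structures.
From mathcomp Require Import all_boot all_order all_algebra.
From mathcomp Require Import all_classical all_reals all_analysis.
From mathcomp Require Import ring lra.
Import Order.TTheory GRing.Theory Num.Theory.
Import numFieldNormedType.Exports.
Local Open Scope ring_scope.
Local Open Scope classical_set_scope.

Lemma seq_argmin (R : realType) (T : eqType) (s : seq T) (f : T -> R) :
  s != [::] -> exists2 c, c \in s & forall y, y \in s -> f c <= f y.
Proof.
elim: s => [//|x s IH] _.
case: (eqVneq s [::]) => [->|/IH [c cs Hc]].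
  by exists x; rewrite ?inE // => y; rewrite inE => /eqP ->.
case: (leP (f x) (f c)) => H.
  exists x; first by rewrite inE eqxx.
  move=> y; rewrite inE => /orP [/eqP -> //|/Hc]; exact: le_trans.
exists c; first by rewrite inE cs orbT.
move=> y; rewrite inE => /orP [/eqP -> |/Hc //]; exact: ltW.
Qed.

Lemma sum_pos (R : realType) (T : eqType) (s : seq T) (f : T -> R) :
  s != [::] -> (forall x, x \in s -> 0 < f x) -> 0 < \sum_(x <- s) f x.
Proof.
elim: s => [//|x s IH] _ H.
rewrite big_cons.
case: (eqVneq s [::]) => [->|ns].
  by rewrite big_nil addr0; apply: H; rewrite inE eqxx.
apply: addr_gt0; first by apply: H; rewrite inE eqxx.
by apply: IH => // y ys; apply: H; rewrite inE ys orbT.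
Qed.

Lemma sum_cvg (R : realType) (T : eqType) (F : set_system R) (FF : Filter F)
  (s : seq T) (f : T -> R -> R) (l : T -> R) :
  (forall i, i \in s -> f i @ F --> l i) ->
  (fun x => \sum_(i <- s) f i x) @ F --> \sum_(i <- s) l i.
Proof.
elim: s => [|i s IH] H.
  rewrite big_nil; under eq_cvg do rewrite big_nil; exact: cvg_cst.
rewrite big_cons; under eq_cvg do rewrite big_cons.
apply: cvgD; first by apply: H; rewrite inE eqxx.
by apply: IH => j js; apply: H; rewrite inE js orbT.
Qed.

Lemma sqdistC (R : realType) (n : nat) (x y : 'rV[R]_n) : sqdist x y = sqdist y x.
Proof. by apply: eq_bigr => i _; rewrite -sqrrN opprB. Qed.

Theorem mainTheorem3 (R : realType) (n : nat) (A : set 'rV[R]_n)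
  (q : R -> 'rV[R]_n -> 'rV[R]_n -> R)
  (p : 'rV[R]_n -> R) (supp : seq 'rV[R]_n) (a' : 'rV[R]_n)
  (S : 'rV[R]_n -> 'rV[R]_n -> R) :
  noise_assumption A q ->
  finite_support_prob A p supp ->
  A a' ->
  (forall a s, a \in supp -> 0 < s -> 0 < q s a' a) ->
  ((fun s => \sum_(a <- supp) S a a' * posterior q p supp s a' a) @ 0^'+ -->
     (\sum_(a <- supp | a \in closest supp a') S a a' * p a) /
     (\sum_(a <- supp | a \in closest supp a') p a)) /\
  (\sum_(a <- supp | a \in closest supp a') S a a' * p a) /
     (\sum_(a <- supp | a \in closest supp a') p a)
  = \sum_(a <- supp | a \in closest supp a') S a a' * pC p supp a' a.
Proof.
move=> [q0 [H1 H2]] [uq [sA [p0 [pP p1]]]] Aa' qpos.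
split; last first.
  rewrite /pC; under [RHS]eq_bigr => a _ do rewrite mulrA.
  by rewrite -big_distrl.
have ne : supp != [::] by apply/eqP => E; move: p1; rewrite E big_nil => /eqP; rewrite eq_sym oner_eq0.
have [c cs Hc] := @seq_argmin R _ supp (fun y => sqdist a' y) ne.
have cC : c \in closest supp a' by rewrite inE cs /=; apply/allP => y ys; exact: Hc.
pose r s b := q s a' b / q s a' c.
pose L b : R := if b \in closest supp a' then 1 else 0.
have rL : forall b, b \in supp -> r ^~ b @ 0^'+ --> L b.
  move=> b bs; rewrite /L /r; case: ifPn => bC.
    have E : sqdist b a' = sqdist c a'.
      rewrite (@sqdistC R n b) (@sqdistC R n c); apply/eqP; rewrite eq_le.
      move: bC cC; rewrite !inE /= => /andP[_ /allP hb] /andP[_ /allP hc].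
      by rewrite hb // hc.
    have HH := (H2 a' b c Aa' (set_mem (sA _ bs)) (set_mem (sA _ cs)) E). exact: HH.
  have E : sqdist c a' < sqdist b a'.
    rewrite (@sqdistC R n b) (@sqdistC R n c).
    move: bC; rewrite inE /= bs /= => /allPn [y ys]; rewrite -ltNge => hy.
    exact: le_lt_trans (Hc _ ys) hy.
  exact: (H1 a' b c Aa' (set_mem (sA _ bs)) (set_mem (sA _ cs)) E).
have hN : (fun s => \sum_(b <- supp) S b a' * (r s b * p b)) @ 0^'+ -->
    \sum_(b <- supp | b \in closest supp a') S b a' * p b.
  rewrite big_mkcond /=.
  have -> : \sum_(b <- supp) (if b \in closest supp a' then S b a' * p b else 0)
     = \sum_(b <- supp) S b a' * (L b * p b).
    by apply: eq_bigr => b _; rewrite /L; case: ifP => _; rewrite ?mul1r ?mul0r ?mulr0.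
  apply: sum_cvg => b bs; apply: cvgMl_tmp.
  by apply: cvgMr_tmp; exact: rL.
have hD : (fun s => \sum_(b <- supp) r s b * p b) @ 0^'+ -->
    \sum_(b <- supp | b \in closest supp a') p b.
  rewrite big_mkcond /=.
  have -> : \sum_(b <- supp) (if b \in closest supp a' then p b else 0)
     = \sum_(b <- supp) L b * p b.
    by apply: eq_bigr => b _; rewrite /L; case: ifP => _; rewrite ?mul1r ?mul0r.
  apply: sum_cvg => b bs.
  by apply: cvgMr_tmp; exact: rL.
have Dpos : 0 < \sum_(b <- supp | b \in closest supp a') p b.
  rewrite -big_filter; apply: sum_pos.
    apply/eqP => E.
    have : c \in [seq x <- supp | x \in closest supp a'] by rewrite mem_filter cC cs.
    by rewrite E.
  by move=> x; rewrite mem_filter => /andP[_ xs]; apply/pP.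
apply: (cvg_trans _ (cvgM hN (cvgV (lt0r_neq0 Dpos) hD))).
apply: near_eq_cvg.
near=> s.
have s0 : 0 < s by near: s; exact: nbhs_right_gt.
have qc0 : q s a' c != 0 by apply: lt0r_neq0; exact: qpos.
have Q0 : 0 < \sum_(b <- supp) q s a' b * p b.
  by apply: sum_pos => // x xs; apply: mulr_gt0; [exact: qpos | apply/pP].
rewrite /= /posterior /r.
have -> : \sum_(i <- supp) S i a' * (q s a' i / q s a' c * p i)
  = (\sum_(i <- supp) S i a' * q s a' i * p i) / q s a' c.
  by rewrite big_distrl; apply: eq_bigr => i _; rewrite /=; ring.
have -> : \sum_(i <- supp) q s a' i / q s a' c * p i
  = (\sum_(i <- supp) q s a' i * p i) / q s a' c.
  by rewrite big_distrl; apply: eq_bigr => i _; rewrite /=; ring.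
have -> : \sum_(i <- supp) S i a' * (q s a' i * p i / \sum_(b <- supp) q s a' b * p b)
  = (\sum_(i <- supp) S i a' * q s a' i * p i) / \sum_(b <- supp) q s a' b * p b.
  by rewrite big_distrl; apply: eq_bigr => i _; rewrite /=; ring.
move: (lt0r_neq0 Q0) => Q0'.
by field; apply/andP.
Unshelve. all: by end_near.
Qed.
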